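(* Let $f\colon S^1\to S^1$ be a self-transverse smooth map, let $J$ be an arc in the range whose endpoints $x,y$ are regular values of $f$, and suppose that $J_+$ is a positive arc and $J_-$ a negative arc in $f^{-1}(J)$. Then there exists an embedded path $p\colon(I,\partial I)\to(S^1,f^{-1}(x))$ which either starts with $J_+$ and ends with some negative arc $J'_-$ of $f^{-1}(J)$, or starts with $J_-$ and ends with some positive arc $J'_+$ of $f^{-1}(J)$, such that $f\circ p\colon(I,\partial I)\to(S^1,\{x\})$ factors through $(\mathbb{R},\{0\})$ (i.e. lifts to the universal cover $\mathbb{R}\to S^1$ with both endpoints going to $0$).
   Context: Orient both circles. For an arc $J$ in the range transverse to $f$, an orientation of $J$ induces an orientation of $f^{-1}(J)$ via the co-orientation. A component $C$ of $f^{-1}(J)$ is a positive (resp. negative) arc if $f|_C\colon(C,\partial C)\to(J,\partial J)$ has degree $+1$ (resp. $-1$). ''Starts with $J_+$'' means $J_+$ is an initial subarc of the path $p$ (beginning at its endpoint in $f^{-1}(x)$), and ''ends with $J'_-$'' means $J'_-$ is a terminal subarc of $p$. *)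

(* Defs.v *)
From Stdlib Require Import Reals ZArith.
From Coquelicot Require Import Coquelicot.
Open Scope R_scope.

(* The circle S^1 = R / Z.  A real number t represents the point [t]. *)
Definition cong (s t : R) : Prop := exists k : Z, t = s + IZR k.

(* A smooth map f : S^1 -> S^1 is given by a smooth lift F : R -> R with
   F (t + 1) = F t + d for some integer d (the degree); f [t] = [F t]. *)
Definition smooth_circle_map (F : R -> R) : Prop :=
  (forall (n : nat) (t : R), ex_derive_n F n t) /\
  exists d : Z, forall t, F (t + 1) = F t + IZR d.

Definition regular_value (F : R -> R) (x : R) : Prop :=
  forall t, cong (F t) x -> Derive F t <> 0.

(* f is self-transverse: f x f : S^1 x S^1 -> S^1 x S^1 is transverse to the
   diagonal away from the diagonal, i.e. no two distinct points with the same
   image are both critical. *)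
Definition self_transverse (F : R -> R) : Prop :=
  forall s t, ~ cong s t -> cong (F s) (F t) ->
    Derive F s = 0 -> Derive F t = 0 -> False.

(* The arc J in the range is the image of [a,b] (a < b < a + 1), oriented
   from x = [a] to y = [b]. *)
Definition proper_arc (a b : R) : Prop := a < b < a + 1.

Definition inJ (a b : R) (y : R) : Prop :=
  exists k : Z, a + IZR k <= y <= b + IZR k.

(* [u,v] (u < v) lifts a connected component (an arc) of f^{-1}(J):
   it lies in the preimage, and it is maximal among intervals in the preimage. *)
Definition component_arc (F : R -> R) (a b u v : R) : Prop :=
  u < v /\
  (forall t, u <= t <= v -> inJ a b (F t)) /\
  (forall eps, 0 < eps ->
     (exists t, u - eps < t < u /\ ~ inJ a b (F t)) /\
     (exists t, v < t < v + eps /\ ~ inJ a b (F t))).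

Definition bdry_val (F : R -> R) (a b w : R) (e : Z) : Prop :=
  (cong (F w) a /\ e = 0%Z) \/ (cong (F w) b /\ e = 1%Z).

(* Degree of f|_C : (C, dC) -> (J, dJ), C = [u,v] oriented by the domain
   (increasing t), J oriented from x to y. *)
Definition arc_degree (F : R -> R) (a b u v : R) (n : Z) : Prop :=
  exists eu ev : Z, bdry_val F a b u eu /\ bdry_val F a b v ev /\ n = (ev - eu)%Z.

Definition positive_arc (F : R -> R) (a b u v : R) : Prop :=
  component_arc F a b u v /\ arc_degree F a b u v 1%Z.

Definition negative_arc (F : R -> R) (a b u v : R) : Prop :=
  component_arc F a b u v /\ arc_degree F a b u v (-1)%Z.

(* Paths p : I -> S^1 are given by lifts P : R -> R, considered on [0,1]. *)
Definition cont_on01 (P : R -> R) : Prop :=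
  forall tau, 0 <= tau <= 1 -> forall eps, 0 < eps ->
    exists delta, 0 < delta /\
      forall sg, 0 <= sg <= 1 -> Rabs (sg - tau) < delta -> Rabs (P sg - P tau) < eps.

(* p is an embedding of I into S^1 (continuous and injective, I compact). *)
Definition embedded_path (P : R -> R) : Prop :=
  cont_on01 P /\
  forall t1 t2, 0 <= t1 <= 1 -> 0 <= t2 <= 1 -> cong (P t1) (P t2) -> t1 = t2.

Definition starts_with (P : R -> R) (u v e : R) : Prop :=
  exists (s : R) (m : Z), 0 < s <= 1 /\ P 0 = e + IZR m /\
    (forall tau, 0 <= tau <= s -> u + IZR m <= P tau <= v + IZR m) /\
    (forall w, u + IZR m <= w <= v + IZR m -> exists tau, 0 <= tau <= s /\ P tau = w).

Definition ends_with (P : R -> R) (u v e : R) : Prop :=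
  exists (s : R) (m : Z), 0 <= s < 1 /\ P 1 = e + IZR m /\
    (forall tau, s <= tau <= 1 -> u + IZR m <= P tau <= v + IZR m) /\
    (forall w, u + IZR m <= w <= v + IZR m -> exists tau, s <= tau <= 1 /\ P tau = w).

(* f o p : (I, dI) -> (S^1, {x}) factors through (R, {0}) via the covering
   R -> S^1, r |-> x + r. *)
Definition factors_through_R (F P : R -> R) (a : R) : Prop :=
  exists g : R -> R, cont_on01 g /\ g 0 = 0 /\ g 1 = 0 /\
    forall tau, 0 <= tau <= 1 -> cong (a + g tau) (F (P tau)).

(* Main.v *)
Require Import Defs.
From Stdlib Require Import Reals ZArith Lra Lia Classical.
From Coquelicot Require Import Coquelicot.
Open Scope R_scope.

Lemma gap a b K y : proper_arc a b -> b + IZR K < y < a + IZR K + 1 -> ~ inJ a b y.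
Proof.
  intros [H1 H2] Hy [j [Hj1 Hj2]].
  destruct (Z_le_gt_dec j K) as [l|l].
  - apply IZR_le in l. lra.
  - assert (Hj : (K+1 <= j)%Z) by lia. apply IZR_le in Hj.
    rewrite plus_IZR in Hj. simpl in Hj. lra.
Qed.

Lemma level_b a b K m y : proper_arc a b -> a + IZR K <= y <= b + IZR K ->
  y = b + IZR m -> m = K.
Proof.
  intros [H1 H2] Hy ->.
  assert (IZR m <= IZR K) by lra. apply le_IZR in H.
  assert (IZR K < IZR (m+1)) by (rewrite plus_IZR; simpl; lra).
  apply lt_IZR in H0. lia.
Qed.

Lemma level_a a b K m y : proper_arc a b -> a + IZR K <= y <= b + IZR K ->
  y = a + IZR m -> m = K.
Proof.
  intros [H1 H2] Hy ->.
  assert (IZR K <= IZR m) by lra. apply le_IZR in H.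
  assert (IZR m < IZR (K+1)) by (rewrite plus_IZR; simpl; lra).
  apply lt_IZR in H0. lia.
Qed.

Lemma not_ab a b y : proper_arc a b -> cong y a -> cong y b -> False.
Proof.
  intros [H1 H2] [k Hk] [m Hm].
  assert (IZR k < IZR m) by lra. assert (IZR m < IZR (k+1)) by (rewrite plus_IZR; simpl; lra).
  apply lt_IZR in H. apply lt_IZR in H0. lia.
Qed.

Lemma sign_deriv f x l : derivable_pt_lim f x l -> l <> 0 ->
  exists d, 0 < d /\ forall h, 0 < h < d ->
   (0 < l -> f (x+h) > f x /\ f (x-h) < f x) /\
   (l < 0 -> f (x+h) < f x /\ f (x-h) > f x).
Proof.
  intros Hd Hl.
  assert (He : 0 < Rabs l / 2) by (apply Rabs_pos_lt in Hl; lra).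
  destruct (Hd _ He) as [dl Hdl].
  exists dl. split; [apply cond_pos|]. intros h Hh.
  assert (Q1 := Hdl h ltac:(lra) ltac:(rewrite Rabs_pos_eq; lra)).
  assert (Q2 := Hdl (-h) ltac:(lra) ltac:(rewrite Rabs_Ropp, Rabs_pos_eq; lra)).
  apply Rabs_def2 in Q1. apply Rabs_def2 in Q2.
  replace (x + - h) with (x - h) in Q2 by ring.
  set (D1 := f (x+h) - f x) in *. set (D2 := f (x-h) - f x) in *.
  assert (E1 : D1 = (D1 / h) * h) by (field; lra).
  assert (E2 : D2 = (D2 / - h) * (- h)) by (field; lra).
  set (q1 := D1 / h) in *. set (q2 := D2 / - h) in *.
  split; intro Hs.
  - rewrite Rabs_pos_eq in Q1, Q2 by lra.
    assert (0 < q1) by lra. assert (0 < q2) by lra.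
    split; [assert (0 < q1 * h) by (apply Rmult_lt_0_compat; lra) | assert (0 < q2 * h) by (apply Rmult_lt_0_compat; lra)]; unfold D1, D2 in *; lra.
  - rewrite Rabs_left in Q1, Q2 by lra.
    assert (q1 < 0) by lra. assert (q2 < 0) by lra.
    split; [assert (0 < - q1 * h) by (apply Rmult_lt_0_compat; lra) | assert (0 < - q2 * h) by (apply Rmult_lt_0_compat; lra)]; unfold D1, D2 in *; lra.
Qed.

Lemma cont_eps f x : continuity_pt f x -> forall eps, 0 < eps ->
  exists d, 0 < d /\ forall y, Rabs (y - x) < d -> Rabs (f y - f x) < eps.
Proof.
  intros H eps He. destruct (H eps He) as [d [Hd Hy]].
  exists d. split; auto. intros y Hyx.
  destruct (Req_dec y x) as [->|Hne].
  - unfold Rminus. rewrite Rplus_opp_r, Rabs_R0. auto.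
  - apply (Hy y). split; [split; [exact I| auto]|]. exact Hyx.
Qed.

Lemma ivt2 F x1 x2 y : (forall x, continuity_pt F x) -> (F x1 - y) * (F x2 - y) <= 0 ->
  exists z, ((x1 <= z <= x2) \/ (x2 <= z <= x1)) /\ F z = y.
Proof.
  intros Hc Hp.
  assert (Hc' : continuity (fun s => F s - y)).
  { intro x. apply continuity_pt_minus; auto. apply continuity_pt_const. intros u v; auto. }
  destruct (Rle_dec x1 x2).
  - destruct (IVT_cor _ x1 x2 Hc' r Hp) as [z [Hz Hz2]]. exists z. split; [left; auto| lra].
  - destruct (IVT_cor _ x2 x1 Hc' ltac:(lra) ltac:(lra)) as [z [Hz Hz2]]. exists z. split; [right; auto| lra].
Qed.

Lemma stay F a b K p q c : proper_arc a b -> (forall x, continuity_pt F x) ->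
  p <= c <= q -> a + IZR K <= F c <= b + IZR K ->
  (forall t, p <= t <= q -> inJ a b (F t)) ->
  forall t, p <= t <= q -> a + IZR K <= F t <= b + IZR K.
Proof.
  intros Hab Hc Hcq HFc HJ t Ht. destruct Hab as [H1 H2].
  destruct (Rle_dec (a + IZR K) (F t)) as [l1|l1];
  destruct (Rle_dec (F t) (b + IZR K)) as [l2|l2]; try lra; exfalso.
  - set (y := (b + IZR K + Rmin (F t) (a + IZR K + 1)) / 2).
    assert (Hm1 := Rmin_l (F t) (a + IZR K + 1)). assert (Hm2 := Rmin_r (F t) (a + IZR K + 1)).
    assert (b + IZR K < Rmin (F t) (a + IZR K + 1)) by (apply Rmin_glb_lt; lra).
    destruct (ivt2 F c t y Hc ltac:(unfold y in *; nra)) as [z [Hz Hz2]].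
    apply (gap a b K y); [split; lra| unfold y; lra|]. rewrite <- Hz2. apply HJ. lra.
  - set (y := (a + IZR K + Rmax (F t) (b + IZR K - 1)) / 2).
    assert (Hm1 := Rmax_l (F t) (b + IZR K - 1)). assert (Hm2 := Rmax_r (F t) (b + IZR K - 1)).
    assert (Rmax (F t) (b + IZR K - 1) < a + IZR K) by (apply Rmax_lub_lt; lra).
    destruct (ivt2 F c t y Hc ltac:(unfold y in *; nra)) as [z [Hz Hz2]].
    apply (gap a b (K-1) y); [split; lra| unfold y; rewrite minus_IZR; simpl; lra|]. rewrite <- Hz2. apply HJ. lra.
Qed.

Lemma lub_approx E m : is_lub E m -> forall eps, 0 < eps -> exists x, E x /\ m - eps < x /\ x <= m.
Proof.
  intros [Hu Hl] eps He. apply NNPP. intro Hn.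
  assert (is_upper_bound E (m - eps)).
  { intros x Ex. destruct (Rle_dec x (m - eps)); auto. exfalso. apply Hn. exists x.
    split; auto. split; [lra| apply Hu; auto]. }
  apply Hl in H. lra.
Qed.

Lemma cong_of y a K : y = a + IZR K -> cong y a.
Proof. intros H. exists (-K)%Z. rewrite opp_IZR. lra. Qed.

Lemma rmin2 x y : 0 < x -> 0 < y -> 0 < Rmin x y /\ Rmin x y <= x /\ Rmin x y <= y.
Proof.
  intros. split; [apply Rmin_pos; auto| split; [apply Rmin_l| apply Rmin_r]].
Qed.

Lemma rabs_lt x d : - d < x < d -> Rabs x < d.
Proof. intros [H1 H2]. apply Rabs_def1; lra. Qed.

Lemma core F a b p q :
  (forall x, continuity_pt F x) ->
  (forall t, cong (F t) a -> exists l, l <> 0 /\ derivable_pt_lim F t l) ->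
  (exists c, forall t, F (t+1) = F t + c) ->
  proper_arc a b ->
  component_arc F a b p q -> cong (F p) a -> cong (F q) b ->
  F (p+1) <= F p ->
  exists u v, component_arc F a b u v /\ cong (F u) b /\ cong (F v) a /\
    q < u /\ u < v /\ v < p + 1 /\ F v = F p.
Proof.
  intros Fc Freg [c Hc] Hab [Hpq [HJ Hmax]] [k Hk] [m Hm] Hd.
  set (K := (-k)%Z).
  assert (HFp : F p = a + IZR K) by (unfold K; rewrite opp_IZR; lra).
  assert (Hab' := Hab). destruct Hab' as [Hab1 Hab2].
  assert (S1 : forall t, p <= t <= q -> a + IZR K <= F t <= b + IZR K).
  { apply (stay F a b K p q p Hab Fc); [lra| lra| exact HJ]. }
  assert (HFq : F q = b + IZR K).
  { assert (Hl := level_b a b K (-m) (F q) Hab (S1 q ltac:(lra)) ltac:(rewrite opp_IZR; lra)).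
    rewrite <- Hl, opp_IZR. lra. }
  assert (S3 : forall t, p < t <= q -> F t > a + IZR K).
  { intros t Ht. destruct (S1 t ltac:(lra)) as [h1 h2].
    destruct (Rle_lt_or_eq_dec _ _ h1) as [h|h]; [lra|]. exfalso.
    assert (t <> q) by (intro; subst; lra).
    destruct (Freg t (cong_of _ _ _ (eq_sym h))) as [l [Hl0 Hl]].
    destruct (sign_deriv _ _ _ Hl Hl0) as [d [Hd0 Hdd]].
    destruct (Rlt_or_le 0 l) as [Hlp|Hln].
    - destruct (rmin2 (d/2) ((t-p)/2) ltac:(lra) ltac:(lra)) as [A1 [A2 A3]].
      set (h0 := Rmin (d/2) ((t-p)/2)) in *.
      destruct (Hdd h0 ltac:(lra)) as [[_ X] _]; auto.
      destruct (S1 (t - h0) ltac:(lra)). lra.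
    - destruct (rmin2 (d/2) ((q-t)/2) ltac:(lra) ltac:(lra)) as [A1 [A2 A3]].
      set (h0 := Rmin (d/2) ((q-t)/2)) in *.
      destruct (Hdd h0 ltac:(lra)) as [_ [X _]]; [lra|].
      destruct (S1 (t + h0) ltac:(lra)). lra. }
  assert (S4 : q < p + 1).
  { destruct (Rlt_or_le q (p+1)) as [h|h]; auto.
    assert (X := S3 (p+1) ltac:(lra)). lra. }
  destruct (ivt2 F q (p+1) (a + IZR K) Fc) as [z [Hz HFz]].
  { assert (0 < F q - (a + IZR K)) by lra. assert (F (p+1) - (a + IZR K) <= 0) by lra. nra. }
  assert (Hz' : q <= z <= p + 1) by (destruct Hz; lra). clear Hz.
  set (E := fun x => q <= x /\ forall s, q <= s <= x -> F s > a + IZR K).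
  assert (Hub : is_upper_bound E z).
  { intros x [Hx1 Hx2]. destruct (Rle_dec x z) as [h|h]; auto.
    assert (X := Hx2 z ltac:(lra)). lra. }
  assert (HEq : E q).
  { split; [lra| intros s Hs; replace s with q by lra; lra]. }
  destruct (completeness E (ex_intro _ z Hub) (ex_intro _ q HEq)) as [v Hv].
  assert (Hqv : q <= v) by (apply (proj1 Hv); exact HEq).
  assert (Hvz : v <= z) by (apply (proj2 Hv); exact Hub).
  assert (FA : forall s, q <= s < v -> F s > a + IZR K).
  { intros s Hs. destruct (lub_approx E v Hv (v - s) ltac:(lra)) as [x [[Ex1 Ex2] [Hx1 Hx2]]].
    apply Ex2. lra. }
  assert (FB : F v = a + IZR K).
  { destruct (total_order_T (F v) (a + IZR K)) as [[h|h]|h]; auto; exfalso.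
    - assert (q <> v) by (intro; subst; lra).
      destruct (cont_eps F v (Fc v) (a + IZR K - F v) ltac:(lra)) as [d [Hd0 Hdd]].
      destruct (rmin2 (d/2) ((v-q)/2) ltac:(lra) ltac:(lra)) as [A1 [A2 A3]].
      set (h0 := Rmin (d/2) ((v-q)/2)) in *.
      assert (X := FA (v - h0) ltac:(lra)).
      assert (Y := Hdd (v - h0) ltac:(apply rabs_lt; lra)). apply Rabs_def2 in Y. lra.
    - destruct (cont_eps F v (Fc v) (F v - (a + IZR K)) ltac:(lra)) as [d [Hd0 Hdd]].
      assert (E (v + d/2)).
      { split; [lra|]. intros s Hs. destruct (Rlt_or_le s v); [apply FA; lra|].
        assert (Y := Hdd s ltac:(apply rabs_lt; lra)). apply Rabs_def2 in Y. lra. }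
      assert (X := proj1 Hv _ H). lra. }
  assert (Hqv' : q < v) by (destruct (Req_dec q v) as [e|e]; [subst; lra| lra]).
  destruct (Freg v (cong_of _ _ _ FB)) as [l [Hl0 Hl]].
  destruct (sign_deriv _ _ _ Hl Hl0) as [dv [Hdv0 Hdv]].
  assert (Hln : l < 0).
  { destruct (Rlt_or_le 0 l) as [h|h]; [exfalso| lra].
    destruct (rmin2 (dv/2) ((v-q)/2) ltac:(lra) ltac:(lra)) as [A1 [A2 A3]].
    set (h0 := Rmin (dv/2) ((v-q)/2)) in *.
    destruct (Hdv h0 ltac:(lra)) as [[_ X] _]; auto.
    assert (Y := FA (v - h0) ltac:(lra)). lra. }
  assert (DV : forall h, 0 < h < dv -> F (v+h) < a + IZR K /\ F (v-h) > a + IZR K).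
  { intros h Hh. destruct (Hdv h Hh) as [_ X]. rewrite <- FB. apply X; auto. }
  assert (S7 : v < p + 1).
  { destruct (Rlt_or_le v (p+1)) as [h|h]; auto. exfalso.
    assert (Hc0 := Hc p). assert (Hv1 : v = p + 1) by lra. rewrite <- Hv1 in Hc0.
    destruct (rmin2 (dv/2) ((q-p)/2) ltac:(lra) ltac:(lra)) as [A1 [A2 A3]].
    set (h0 := Rmin (dv/2) ((q-p)/2)) in *.
    destruct (DV h0 ltac:(lra)) as [X _].
    assert (Y := Hc (p + h0)). replace (p + h0 + 1) with (v + h0) in Y by lra.
    assert (Z := S3 (p + h0) ltac:(lra)). lra. }
  assert (RM : forall eps, 0 < eps -> exists t, v < t < v + eps /\ ~ inJ a b (F t)).
  { intros eps He.
    destruct (cont_eps F v (Fc v) (1 - (b - a)) ltac:(lra)) as [dc [Hdc0 Hdc]].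
    destruct (rmin2 (eps/2) (dv/2) ltac:(lra) ltac:(lra)) as [A1 [A2 A3]].
    destruct (rmin2 (Rmin (eps/2) (dv/2)) (dc/2) ltac:(lra) ltac:(lra)) as [B1 [B2 B3]].
    set (h0 := Rmin (Rmin (eps/2) (dv/2)) (dc/2)) in *.
    exists (v + h0). split; [lra|].
    destruct (DV h0 ltac:(lra)) as [X _].
    assert (Y := Hdc (v + h0) ltac:(apply rabs_lt; lra)). apply Rabs_def2 in Y.
    apply (gap a b (K-1)); auto. rewrite minus_IZR. simpl. lra. }
  set (E2 := fun t => q <= t <= v /\ ~ inJ a b (F t)).
  destruct (Hmax (v - q) ltac:(lra)) as [_ [t0 [Ht0 Hnt0]]].
  assert (HE2t0 : E2 t0) by (split; [lra| auto]).
  assert (HE2b : is_upper_bound E2 v) by (intros x [Hx _]; lra).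
  destruct (completeness E2 (ex_intro _ v HE2b) (ex_intro _ t0 HE2t0)) as [u Hu].
  assert (Hut0 : t0 <= u) by (apply (proj1 Hu); auto).
  assert (Huv : u <= v) by (apply (proj2 Hu); auto).
  assert (G1 : forall t, u < t <= v -> inJ a b (F t)).
  { intros t Ht. apply NNPP. intro Hn.
    assert (t <= u) by (apply (proj1 Hu); split; [lra|auto]). lra. }
  assert (G2 : forall t, u < t <= v -> a + IZR K <= F t <= b + IZR K).
  { intros t Ht. apply (stay F a b K t v v Hab Fc); [lra| lra| |lra].
    intros s Hs. apply G1; lra. }
  assert (G3 : u < v).
  { destruct (cont_eps F v (Fc v) (b - a) ltac:(lra)) as [dc [Hdc0 Hdc]].
    destruct (rmin2 (dv/2) (dc/2) ltac:(lra) ltac:(lra)) as [A1 [A2 A3]].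
    set (h0 := Rmin (dv/2) (dc/2)) in *.
    assert (is_upper_bound E2 (v - h0)).
    { intros x [Hx Hnx]. destruct (Rle_dec x (v - h0)) as [h|h]; auto. exfalso. apply Hnx.
      exists K. destruct (Req_dec x v) as [->|Hxv]; [lra|].
      destruct (DV (v - x) ltac:(lra)) as [_ X]. replace (v - (v - x)) with x in X by ring.
      assert (Y := Hdc x ltac:(apply rabs_lt; lra)). apply Rabs_def2 in Y. lra. }
    apply (proj2 Hu) in H. lra. }
  assert (G4 : a + IZR K <= F u <= b + IZR K).
  { split; apply Rnot_lt_le; intro h.
    - destruct (cont_eps F u (Fc u) (a + IZR K - F u) ltac:(lra)) as [d [Hd0 Hdd]].
      destruct (rmin2 (d/2) ((v-u)/2) ltac:(lra) ltac:(lra)) as [A1 [A2 A3]].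
      set (h0 := Rmin (d/2) ((v-u)/2)) in *.
      assert (X := G2 (u + h0) ltac:(lra)).
      assert (Y := Hdd (u + h0) ltac:(apply rabs_lt; lra)). apply Rabs_def2 in Y. lra.
    - destruct (cont_eps F u (Fc u) (F u - (b + IZR K)) ltac:(lra)) as [d [Hd0 Hdd]].
      destruct (rmin2 (d/2) ((v-u)/2) ltac:(lra) ltac:(lra)) as [A1 [A2 A3]].
      set (h0 := Rmin (d/2) ((v-u)/2)) in *.
      assert (X := G2 (u + h0) ltac:(lra)).
      assert (Y := Hdd (u + h0) ltac:(apply rabs_lt; lra)). apply Rabs_def2 in Y. lra. }
  assert (S8 : inJ a b (F u)) by (exists K; auto).
  assert (FUa : F u > a + IZR K) by (apply FA; lra).
  assert (G5 : F u = b + IZR K).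
  { destruct (Rle_lt_or_eq_dec _ _ (proj2 G4)) as [h|h]; auto. exfalso.
    destruct (rmin2 (F u - (a + IZR K)) (b + IZR K - F u) ltac:(lra) ltac:(lra)) as [A1 [A2 A3]].
    destruct (cont_eps F u (Fc u) _ A1) as [d [Hd0 Hdd]].
    destruct (lub_approx E2 u Hu d Hd0) as [x [[Hx Hnx] [Hx1 Hx2]]].
    assert (Y := Hdd x ltac:(apply rabs_lt; lra)). apply Rabs_def2 in Y.
    apply Hnx. exists K. lra. }
  assert (LM : forall eps, 0 < eps -> exists t, u - eps < t < u /\ ~ inJ a b (F t)).
  { intros eps He. destruct (lub_approx E2 u Hu eps He) as [x [[Hx Hnx] [Hx1 Hx2]]].
    exists x. split; auto. split; auto. destruct (Req_dec x u) as [->|]; [contradiction| lra]. }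
  exists u, v. split; [|split; [|split; [|split; [|split; [|split]]]]].
  - split; [lra| split].
    + intros t Ht. destruct (Req_dec t u) as [->|]; [auto| apply G1; lra].
    + intros eps He. split; [apply LM| apply RM]; auto.
  - apply (cong_of _ _ K). auto.
  - apply (cong_of _ _ K). auto.
  - lra.
  - lra.
  - lra.
  - lra.
Qed.

Lemma lin_cont p0 p1 x : continuity_pt (fun tau => p0 + tau * (p1 - p0)) x.
Proof.
  apply derivable_continuous_pt. exists (p1 - p0). apply is_derive_Reals.
  auto_derive; try exact I; try ring.
Qed.

Lemma cont_on01_of h : (forall x, continuity_pt h x) -> cont_on01 h.
Proof.
  intros Hc tau Htau eps He. destruct (cont_eps h tau (Hc tau) eps He) as [d [Hd Hdd]].
  exists d. split; [exact Hd|]. intros sg _ Hs. apply Hdd; auto.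
Qed.

Lemma embedded_lin p0 p1 : 0 < Rabs (p1 - p0) < 1 ->
  embedded_path (fun tau => p0 + tau * (p1 - p0)).
Proof.
  intros Hr. split.
  - apply cont_on01_of. intro. apply lin_cont.
  - intros t1 t2 H1 H2 [m Hm].
    assert (Em : IZR m = (t2 - t1) * (p1 - p0)) by lra.
    assert (R1 : Rabs (t2 - t1) <= 1) by (apply Rabs_le; lra).
    assert (R2 : Rabs (IZR m) < 1).
    { rewrite Em, Rabs_mult. assert (0 <= Rabs (t2 - t1)) by apply Rabs_pos. nra. }
    apply Rabs_def2 in R2.
    assert (m = 0%Z).
    { destruct R2 as [A B]. change 1 with (IZR 1) in A. replace (- (1)) with (IZR (-1)) in B by reflexivity.
      apply lt_IZR in A. apply lt_IZR in B. lia. }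
    subst m. simpl in Em. symmetry in Em. apply Rmult_integral in Em. destruct Em as [E|E]; [lra|].
    rewrite E, Rabs_R0 in Hr. lra.
Qed.

Lemma factors_lin F a p0 p1 : (forall x, continuity_pt F x) -> cong (F p0) a -> F p1 = F p0 ->
  factors_through_R F (fun tau => p0 + tau * (p1 - p0)) a /\
  cong (F (p0 + 0 * (p1 - p0))) a /\ cong (F (p0 + 1 * (p1 - p0))) a.
Proof.
  intros Fc [k Hk] Hp.
  replace (p0 + 0 * (p1 - p0)) with p0 by ring.
  replace (p0 + 1 * (p1 - p0)) with p1 by ring.
  split; [| split; [exists k; auto| exists k; lra]].
  exists (fun tau => F (p0 + tau * (p1 - p0)) - F p0). split; [|split; [|split]].
  - apply cont_on01_of. intro x. apply continuity_pt_minus.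
    + apply (continuity_pt_comp (fun tau => p0 + tau * (p1 - p0)) F). apply lin_cont. apply Fc.
    + apply continuity_pt_const. intros u v; auto.
  - replace (p0 + 0 * (p1 - p0)) with p0 by ring. ring.
  - replace (p0 + 1 * (p1 - p0)) with p1 by ring. lra.
  - intros tau _. exists (-k)%Z. rewrite opp_IZR. lra.
Qed.

Lemma start_inc p0 p1 q : p0 < q <= p1 ->
  starts_with (fun tau => p0 + tau * (p1 - p0)) p0 q p0.
Proof.
  intros Hq. remember (p1 - p0) as D eqn:HDe. assert (HD : 0 < D) by lra.
  exists ((q - p0) / D), 0%Z.
  assert (Hs : (q - p0) / D * D = q - p0) by (field; lra).
  remember ((q - p0) / D) as s eqn:Hse. simpl. clear Hse.
  split; [split; nra|]. split; [ring|]. split.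
  - intros tau Ht. nra.
  - intros w Hw. exists ((w - p0) / D).
    assert (Ht : (w - p0) / D * D = w - p0) by (field; lra).
    remember ((w - p0) / D) as t eqn:Hte. clear Hte. split; [split; nra| lra].
Qed.

Lemma end_inc p0 p1 u : p0 <= u < p1 ->
  ends_with (fun tau => p0 + tau * (p1 - p0)) u p1 p1.
Proof.
  intros Hq. remember (p1 - p0) as D eqn:HDe. assert (HD : 0 < D) by lra.
  exists ((u - p0) / D), 0%Z.
  assert (Hs : (u - p0) / D * D = u - p0) by (field; lra).
  remember ((u - p0) / D) as s eqn:Hse. simpl. clear Hse.
  split; [split; nra|]. split; [subst D; ring|]. split.
  - intros tau Ht.  nra.
  - intros w Hw. exists ((w - p0) / D).
    assert (Ht : (w - p0) / D * D = w - p0) by (field; lra).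
    remember ((w - p0) / D) as t eqn:Hte. clear Hte. split; [ split; nra| lra].
Qed.

Lemma start_dec p0 p1 q : p1 <= q < p0 ->
  starts_with (fun tau => p0 + tau * (p1 - p0)) q p0 p0.
Proof.
  intros Hq. remember (p1 - p0) as D eqn:HDe. assert (HD : D < 0) by lra.
  exists ((q - p0) / D), 0%Z.
  assert (Hs : (q - p0) / D * D = q - p0) by (field; lra).
  remember ((q - p0) / D) as s eqn:Hse. simpl. clear Hse.
  split; [ split; nra|]. split; [ring|]. split.
  - intros tau Ht.  nra.
  - intros w Hw. exists ((w - p0) / D).
    assert (Ht : (w - p0) / D * D = w - p0) by (field; lra).
    remember ((w - p0) / D) as t eqn:Hte. clear Hte. split; [ split; nra| lra].
Qed.

Lemma end_dec p0 p1 v : p1 < v <= p0 ->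
  ends_with (fun tau => p0 + tau * (p1 - p0)) p1 v p1.
Proof.
  intros Hq. remember (p1 - p0) as D eqn:HDe. assert (HD : D < 0) by lra.
  exists ((v - p0) / D), 0%Z.
  assert (Hs : (v - p0) / D * D = v - p0) by (field; lra).
  remember ((v - p0) / D) as s eqn:Hse. simpl. clear Hse.
  split; [ split; nra|]. split; [subst D; ring|]. split.
  - intros tau Ht.  nra.
  - intros w Hw. exists ((w - p0) / D).
    assert (Ht : (w - p0) / D * D = w - p0) by (field; lra).
    remember ((w - p0) / D) as t eqn:Hte. clear Hte. split; [ split; nra| lra].
Qed.

Lemma comp_refl F H a b u v : (forall t, H t = F (-t)) ->
  component_arc F a b u v -> component_arc H a b (-v) (-u).
Proof.
  intros HH [Huv [HJ Hm]]. split; [lra|split].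
  - intros t Ht. rewrite HH. apply HJ; lra.
  - intros eps He. destruct (Hm eps He) as [[t1 [Ht1 Hn1]] [t2 [Ht2 Hn2]]]. split.
    + exists (-t2). rewrite HH, Ropp_involutive. split; [lra|auto].
    + exists (-t1). rewrite HH, Ropp_involutive. split; [lra|auto].
Qed.

Theorem lemma3 (F : R -> R) (a b uP vP uN vN : R) :
  smooth_circle_map F ->
  self_transverse F ->
  proper_arc a b ->
  regular_value F a -> regular_value F b ->
  positive_arc F a b uP vP ->
  negative_arc F a b uN vN ->
  exists P : R -> R,
    embedded_path P /\
    cong (F (P 0)) a /\ cong (F (P 1)) a /\
    factors_through_R F P a /\
    ((starts_with P uP vP uP /\
      exists u' v', negative_arc F a b u' v' /\ ends_with P u' v' v')
     \/
     (starts_with P uN vN vN /\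
      exists u' v', positive_arc F a b u' v' /\ ends_with P u' v' u')).
Proof.
  intros [Hsm [d Hd]] Hst Hab HrA HrB [HarcP [eu [ev [Hbu [Hbv Hn]]]]]
    [HarcN [eu' [ev' [Hbu' [Hbv' Hn']]]]].
  assert (HD : forall t, derivable_pt_lim F t (Derive F t)).
  { intro t. apply is_derive_Reals. apply Derive_correct. exact (Hsm 1%nat t). }
  assert (Fc : forall x, continuity_pt F x).
  { intro x. apply derivable_continuous_pt. exists (Derive F x). apply HD. }
  assert (Freg : forall t, cong (F t) a -> exists l, l <> 0 /\ derivable_pt_lim F t l).
  { intros t Ht. exists (Derive F t). split; [apply HrA; auto| apply HD]. }
  assert (HPa : cong (F uP) a /\ cong (F vP) b).
  { destruct Hbu as [[A1 A2]|[A1 A2]]; destruct Hbv as [[B1 B2]|[B1 B2]]; subst;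
      try (exfalso; lia); split; auto. }
  assert (HNa : cong (F uN) b /\ cong (F vN) a).
  { destruct Hbu' as [[A1 A2]|[A1 A2]]; destruct Hbv' as [[B1 B2]|[B1 B2]]; subst;
      try (exfalso; lia); split; auto. }
  assert (HuvP : uP < vP) by apply (proj1 HarcP).
  assert (HuvN : uN < vN) by apply (proj1 HarcN).
  destruct (Z_le_gt_dec d 0) as [Hd0|Hd0].
  - apply IZR_le in Hd0.
    destruct (core F a b uP vP Fc Freg (ex_intro _ (IZR d) Hd) Hab HarcP (proj1 HPa) (proj2 HPa)
      ltac:(rewrite Hd; lra)) as [u [v [Hc [Hcu [Hcv [H1 [H2 [H3 H4]]]]]]]].
    exists (fun tau => uP + tau * (v - uP)).
    destruct (factors_lin F a uP v Fc (proj1 HPa) H4) as [Hf [Hc0 Hc1]].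
    split; [apply embedded_lin; rewrite Rabs_pos_eq; lra|].
    split; [auto|]. split; [auto|]. split; [auto|].
    left. split; [apply start_inc; lra|].
    exists u, v. split.
    + split; auto. exists 1%Z, 0%Z. split; [right; split; auto| split; [left; split; auto| reflexivity]].
    + apply end_inc; lra.
  - apply Z.gt_lt in Hd0. apply IZR_lt in Hd0.
    set (G := fun t => F (- t)).
    assert (HDG : forall t, derivable_pt_lim G t (Derive F (- t) * (-1))).
    { intro t. unfold G. change (fun t0 => F (- t0)) with (comp F Ropp).
      apply derivable_pt_lim_comp; [| apply HD].
      apply is_derive_Reals. auto_derive; try exact I; try ring. }
    assert (Gc : forall x, continuity_pt G x).
    { intro x. apply derivable_continuous_pt. eexists. apply HDG. }
    assert (Greg : forall t, cong (G t) a -> exists l, l <> 0 /\ derivable_pt_lim G t l).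
    { intros t Ht. eexists. split; [| apply HDG].
      assert (Derive F (- t) <> 0) by (apply HrA; auto). lra. }
    assert (Gper : exists c, forall t, G (t + 1) = G t + c).
    { exists (- IZR d). intro t. unfold G. assert (X := Hd (- (t+1))).
      replace (- (t+1) + 1) with (- t) in X by ring. lra. }
    assert (HarcG : component_arc G a b (- vN) (- uN)) by (apply (comp_refl F G); auto).
    assert (HGa : cong (G (- vN)) a) by (unfold G; rewrite Ropp_involutive; apply HNa).
    assert (HGb : cong (G (- uN)) b) by (unfold G; rewrite Ropp_involutive; apply HNa).
    assert (HGd : G (- vN + 1) <= G (- vN)).
    { unfold G. rewrite Ropp_involutive. assert (X := Hd (vN - 1)).
      replace (vN - 1 + 1) with vN in X by ring. replace (- (- vN + 1)) with (vN - 1) by ring. lra. }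
    destruct (core G a b (- vN) (- uN) Gc Greg Gper Hab HarcG HGa HGb HGd)
      as [u [v [Hc [Hcu [Hcv [H1 [H2 [H3 H4]]]]]]]].
    unfold G in Hcu, Hcv, H4. rewrite Ropp_involutive in H4.
    assert (HcF : component_arc F a b (- v) (- u)).
    { apply (comp_refl G F); auto. intro t. unfold G. rewrite Ropp_involutive. auto. }
    exists (fun tau => vN + tau * (- v - vN)).
    destruct (factors_lin F a vN (- v) Fc (proj2 HNa) H4) as [Hf [Hc0 Hc1]].
    split; [apply embedded_lin; rewrite Rabs_left; lra|].
    split; [auto|]. split; [auto|]. split; [auto|].
    right. split; [apply start_dec; lra|].
    exists (- v), (- u). split.
    + split; auto. exists 0%Z, 1%Z. split; [left; split; auto| split; [right; split; auto| reflexivity]].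
    + apply end_dec; lra.
Qed.
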